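(* Let $\Phi:\mathbb R^n\times\mathbb R^m\times\mathbb R^m\to\mathbb R$ and let $\{w^{(j)}\}_{j\ge0}$, $w^{(j)}=(X^{(j)},Y^{(j)},Z^{(j)})$, be a sequence satisfying Assumptions (A1), (A2), (A3). Then for every $\varepsilon>0$ there is a finite index $j_\varepsilon$ and multipliers $(u,v)\in\mathcal M_M(w^{(j_\varepsilon)})$ with $r_{\rm in}(w^{(j_\varepsilon)};u,v)\le\varepsilon$; in particular $r_{\rm in}(w^{(j_\varepsilon)})\le\varepsilon$. Moreover, for every $N\ge0$, \[ \min_{0\le j\le N}r_{\rm in}(w^{(j)})\le\sqrt{\frac{\Phi(w^{(0)})-\inf_{w:(Y,Z)\in\mathcal C}\Phi(w)}{c_X(N+1)}}. \]
   Context: Notation: $w=(X,Y,Z)\in\mathbb R^n\times\mathbb R^m\times\mathbb R^m$; $\mathcal C=\{(Y,Z): Y\ge0,\ Z\ge0,\ Y_iZ_i=0\ \forall i\}$. For $(Y,Z)\in\mathcal C$: $I_{+0}(w)=\{i:Y_i>0,Z_i=0\}$, $I_{0+}(w)=\{i:Y_i=0,Z_i>0\}$, $I_{00}(w)=\{i:Y_i=Z_i=0\}$; $\mathcal Q_M=\mathbb R_{++}^2\cup(\mathbb R\times\{0\})\cup(\{0\}\times\mathbb R)$; $\mathcal M_M(w)$ is the set of $(u,v)\in\mathbb R^m\times\mathbb R^m$ with $u_i=0$ for $i\in I_{+0}(w)$, $v_i=0$ for $i\in I_{0+}(w)$, $(u_i,v_i)\in\mathcal Q_M$ for $i\in I_{00}(w)$.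 $r_{\rm pri}(w)=\max\{\|\min(Y,0)\|_\infty,\|\min(Z,0)\|_\infty,\|Y\circ Z\|_\infty\}$; for $(u,v)\in\mathcal M_M(w)$, $r_{\rm in}(w;u,v)=\max\{\|\nabla_X\Phi(w)\|_\infty,\|\nabla_Y\Phi(w)-u\|_\infty,\|\nabla_Z\Phi(w)-v\|_\infty,r_{\rm pri}(w)\}$, and $r_{\rm in}(w)=\inf_{(u,v)\in\mathcal M_M(w)}r_{\rm in}(w;u,v)$. Assumption (A1): $\Phi$ is continuously differentiable on a neighborhood of the iterates with Lipschitz gradient there; $\{w^{(j)}\}$ is bounded; and $\inf\{\Phi(X,Y,Z):(Y,Z)\in\mathcal C\}>-\infty$. Assumption (A2): there is $c_X>0$ such that for all $j\ge0$, $\Phi(w^{(j+1)})\le\Phi(w^{(j)})-c_X\|\nabla_X\Phi(w^{(j)})\|_\infty^2$. Assumption (A3): for every $j$, $(Y^{(j)},Z^{(j)})\in\arg\min_{(Y,Z)\in\mathcal C}\Phi(X^{(j)},Y,Z)$. (These model the iterates of a two-block coordinate descent: a sufficient-decrease step in $X$ followed by exact minimization over $(Y,Z)\in\mathcal C$.) *)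

(* Defs.v *)
From HB Require Import structures.
From mathcomp Require Import all_boot all_order all_algebra.
From mathcomp Require Import all_classical all_reals all_analysis.
Set Implicit Arguments. Unset Strict Implicit. Unset Printing Implicit Defensive.
Import Order.TTheory GRing.Theory Num.Theory.
Import numFieldNormedType.Exports.
Local Open Scope classical_set_scope.
Local Open Scope ring_scope.

Section Defs.
Variables (R : realType) (n m : nat).

(* points w = (X, Y, Z) of R^n x R^m x R^m; X = w.1.1, Y = w.1.2, Z = w.2 *)
Definition pt := ('rV[R]_n * 'rV[R]_m * 'rV[R]_m)%type.

Definition infnorm (k : nat) (x : 'rV[R]_k) : R :=
  \big[Num.max/0]_(i < k) `|x ord0 i|.

Definition eX (k : 'I_n) : pt := (delta_mx ord0 k, 0, 0).
Definition eY (k : 'I_m) : pt := (0, delta_mx ord0 k, 0).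
Definition eZ (k : 'I_m) : pt := (0, 0, delta_mx ord0 k).

Definition gradX (Phi : pt -> R) (w : pt) : 'rV[R]_n := \row_k 'D_(eX k) Phi w.
Definition gradY (Phi : pt -> R) (w : pt) : 'rV[R]_m := \row_k 'D_(eY k) Phi w.
Definition gradZ (Phi : pt -> R) (w : pt) : 'rV[R]_m := \row_k 'D_(eZ k) Phi w.

Definition inC (Y Z : 'rV[R]_m) : Prop :=
  forall i, 0 <= Y ord0 i /\ 0 <= Z ord0 i /\ Y ord0 i * Z ord0 i = 0.

Definition inQM (a b : R) : Prop := (0 < a /\ 0 < b) \/ b = 0 \/ a = 0.

Definition inMM (w : pt) (u v : 'rV[R]_m) : Prop :=
  forall i,
    (0 < w.1.2 ord0 i /\ w.2 ord0 i = 0 -> u ord0 i = 0) /\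
    (w.1.2 ord0 i = 0 /\ 0 < w.2 ord0 i -> v ord0 i = 0) /\
    (w.1.2 ord0 i = 0 /\ w.2 ord0 i = 0 -> inQM (u ord0 i) (v ord0 i)).

Definition r_pri (w : pt) : R :=
  Num.max (infnorm (map_mx (fun x => Num.min x 0) w.1.2))
    (Num.max (infnorm (map_mx (fun x => Num.min x 0) w.2))
             (infnorm (\row_i (w.1.2 ord0 i * w.2 ord0 i)))).

Definition r_in_uv (Phi : pt -> R) (w : pt) (u v : 'rV[R]_m) : R :=
  Num.max (infnorm (gradX Phi w))
    (Num.max (infnorm (gradY Phi w - u))
       (Num.max (infnorm (gradZ Phi w - v)) (r_pri w))).

Definition r_in (Phi : pt -> R) (w : pt) : R :=
  inf [set r_in_uv Phi w uv.1 uv.2 | uv in [set uv | inMM w uv.1 uv.2]].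

Definition Phi_inf (Phi : pt -> R) : R :=
  inf [set Phi w | w in [set w : pt | inC w.1.2 w.2]].

Definition A1 (Phi : pt -> R) (w : nat -> pt) : Prop :=
  (exists U : set pt, open U /\ (forall j, U (w j)) /\
     (forall a, U a -> differentiable Phi a) /\
     (forall a, U a -> {for a, continuous (fun b => (gradX Phi b, gradY Phi b, gradZ Phi b))}) /\
     (exists L : R, forall a b, U a -> U b ->
        Num.max (infnorm (gradX Phi a - gradX Phi b))
          (Num.max (infnorm (gradY Phi a - gradY Phi b))
                   (infnorm (gradZ Phi a - gradZ Phi b))) <= L * `|a - b|)) /\
  (exists M : R, forall j, `|w j| <= M) /\
  (exists lb : R, forall x : pt, inC x.1.2 x.2 -> lb <= Phi x).

Definition A2 (Phi : pt -> R) (w : nat -> pt) (cX : R) : Prop :=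
  forall j, Phi (w j.+1) <= Phi (w j) - cX * (infnorm (gradX Phi (w j))) ^+ 2.

Definition A3 (Phi : pt -> R) (w : nat -> pt) : Prop :=
  forall j, inC (w j).1.2 (w j).2 /\
    forall Y Z, inC Y Z -> Phi (w j) <= Phi ((w j).1.1, Y, Z).

End Defs.

(* Main.v *)
Require Import Defs.
From HB Require Import structures.
From mathcomp Require Import all_boot all_order all_algebra.
From mathcomp Require Import all_classical all_reals all_analysis.
From mathcomp Require Import lra.
Import Order.TTheory GRing.Theory Num.Theory.
Import numFieldNormedType.Exports.
Local Open Scope ring_scope.

Lemma D_ge0 (R : realType) (V : normedModType R) (f : V -> R) (a v : V) (d : R) :
  0 < d -> derivable f a v ->
  (forall h, 0 < h -> h < d -> f a <= f (h *: v + a)) -> 0 <= 'D_v f a.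
Proof.
move=> d0 df hmin.
rewrite /derive cvg_at_rightE; last exact: df.
apply: limr_ge.
  rewrite -(cvg_at_rightE (fun h : R => h^-1 *: ((f \o shift a) (h *: v) - f a))) //.
  apply: cvg_trans df; apply: cvg_app.
  move=> A [e egt0 Ae]; exists e => // x xe xgt0; apply: Ae => //.
  exact/lt0r_neq0.
near=> h; apply: mulr_ge0.
  by rewrite invr_ge0; apply: ltW; near: h; exists 1 => /=.
rewrite subr_ge0 /=; apply: hmin.
  by near: h; exists 1 => /=.
near: h; exists d => // h /=; rewrite distrC subr0 => hd h0.
by rewrite -(gtr0_norm h0).
Unshelve. all: by end_near. Qed.

Lemma D_le0 (R : realType) (V : normedModType R) (f : V -> R) (a v : V) (d : R) :
  0 < d -> derivable f a v ->
  (forall h, - d < h -> h < 0 -> f a <= f (h *: v + a)) -> 'D_v f a <= 0.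
Proof.
move=> d0 df hmin.
rewrite /derive cvg_at_leftE; last exact: df.
apply: limr_le.
  rewrite -(cvg_at_leftE (fun h : R => h^-1 *: ((f \o shift a) (h *: v) - f a))) //.
  apply: cvg_trans df; apply: cvg_app.
  move=> A [e egt0 Ae]; exists e => // x xe xgt0; apply: Ae => //.
  exact/ltr0_neq0.
near=> h; apply: mulr_le0_ge0.
  by rewrite invr_le0; apply: ltW; near: h; exists 1 => /=.
rewrite subr_ge0 /=; apply: hmin; last first.
  by near: h; exists 1 => /=.
near: h; exists d => // h /=; rewrite distrC subr0 => hd h0.
by move: hd; rewrite (ltr0_norm h0) ltrNl.
Unshelve. all: by end_near. Qed.

Arguments D_le0 {R V f a v d}.
Arguments D_ge0 {R V f a v d}.

Lemma ptY (R : realType) (n m : nat) (a : pt R n m) k (h : R) :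
  h *: eY R n k + a = (a.1.1, h *: delta_mx ord0 k + a.1.2, a.2).
Proof.
case: a => [[X Y] Z] /=; rewrite /eY.
by congr (_, _, _) => /=; rewrite ?scaler0 ?add0r.
Qed.

Lemma ptZ (R : realType) (n m : nat) (a : pt R n m) k (h : R) :
  h *: eZ R n k + a = (a.1.1, a.1.2, h *: delta_mx ord0 k + a.2).
Proof.
case: a => [[X Y] Z] /=; rewrite /eZ.
by congr (_, _, _) => /=; rewrite ?scaler0 ?add0r.
Qed.

Lemma dentry (R : realType) m (Y : 'rV[R]_m) k i (h : R) :
  (h *: delta_mx ord0 k + Y) ord0 i = (if k == i then h + Y ord0 i else Y ord0 i).
Proof.
rewrite !mxE eqxx /=; have [ki|ne] := eqVneq k i.
  by rewrite mulr1.
by rewrite mulr0 add0r.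
Qed.

Lemma inCY (R : realType) m (Y Z : 'rV[R]_m) k (h : R) :
  inC Y Z -> Z ord0 k = 0 -> 0 <= h + Y ord0 k -> inC (h *: delta_mx ord0 k + Y) Z.
Proof.
move=> hC Zk hk i; rewrite dentry; case: eqP => [<-|_]; last exact: hC.
by rewrite Zk mulr0; split=> //; split.
Qed.

Lemma inCZ (R : realType) m (Y Z : 'rV[R]_m) k (h : R) :
  inC Y Z -> Y ord0 k = 0 -> 0 <= h + Z ord0 k -> inC Y (h *: delta_mx ord0 k + Z).
Proof.
move=> hC Yk hk i; rewrite dentry; case: eqP => [<-|_]; last exact: hC.
by rewrite Yk mul0r; split=> //; split.
Qed.

Lemma stat (R : realType) n m (Phi : pt R n m -> R) (a : pt R n m) :
  differentiable Phi a -> inC a.1.2 a.2 ->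
  (forall Y Z, inC Y Z -> Phi a <= Phi (a.1.1, Y, Z)) ->
  inMM a (gradY Phi a) (gradZ Phi a).
Proof.
move=> da hC hmin i.
have der : forall v, derivable Phi a v by move=> v; exact: diff_derivable.
have dY : forall h, a.2 ord0 i = 0 -> 0 <= h + a.1.2 ord0 i ->
    Phi a <= Phi (h *: eY R n i + a).
  by move=> h Zi hi; rewrite ptY; apply: hmin; exact: inCY.
have dZ : forall h, a.1.2 ord0 i = 0 -> 0 <= h + a.2 ord0 i ->
    Phi a <= Phi (h *: eZ R n i + a).
  by move=> h Yi hi; rewrite ptZ; apply: hmin; exact: inCZ.
rewrite !mxE.
have [Y0 [Z0 YZ0]] := hC i.
split; [|split].
- move=> [Yp Z0']; apply/eqP; rewrite eq_le; apply/andP; split.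
    apply: (D_le0 Yp (der _)) => h h1 h2; apply: dY => //; lra.
  apply: (D_ge0 ltr01 (der _)) => h h1 _; apply: dY => //; lra.
- move=> [Y0' Zp]; apply/eqP; rewrite eq_le; apply/andP; split.
    apply: (D_le0 Zp (der _)) => h h1 h2; apply: dZ => //; lra.
  apply: (D_ge0 ltr01 (der _)) => h h1 _; apply: dZ => //; lra.
move=> [Yz Zz].
have gy : 0 <= 'D_(eY R n i) Phi a.
  apply: (D_ge0 ltr01 (der _)) => h h1 _; apply: dY => //; lra.
have gz : 0 <= 'D_(eZ R n i) Phi a.
  apply: (D_ge0 ltr01 (der _)) => h h1 _; apply: dZ => //; lra.
rewrite /inQM.
have [e|ne] := eqVneq ('D_(eY R n i) Phi a) 0; first by right; right.
have [e'|ne'] := eqVneq ('D_(eZ R n i) Phi a) 0; first by right; left.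
by left; split; rewrite lt_neqAle eq_sym ?ne ?ne'.
Qed.

Lemma infnorm_ge0 (R : realType) k (x : 'rV[R]_k) : 0 <= infnorm x.
Proof. exact: bigmax_ge_id. Qed.
Arguments infnorm_ge0 {R k}.

Lemma infnorm_le (R : realType) k (x : 'rV[R]_k) (b : R) :
  0 <= b -> (forall i, `|x ord0 i| <= b) -> infnorm x <= b.
Proof. by move=> b0 hb; apply: bigmax_le. Qed.
Arguments stat {R n m Phi a}.
Arguments infnorm_le {R k x b}.

Lemma rin_le (R : realType) n m (Phi : pt R n m -> R) (a : pt R n m) :
  differentiable Phi a -> inC a.1.2 a.2 ->
  (forall Y Z, inC Y Z -> Phi a <= Phi (a.1.1, Y, Z)) ->
  inMM a (gradY Phi a) (gradZ Phi a) /\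
  r_in_uv Phi a (gradY Phi a) (gradZ Phi a) <= infnorm (gradX Phi a) /\
  r_in Phi a <= infnorm (gradX Phi a).
Proof.
move=> da hC hmin.
have hM := stat da hC hmin.
have g0 := infnorm_ge0 (gradX Phi a).
have z0 : forall k, infnorm (0 : 'rV[R]_k) <= infnorm (gradX Phi a).
  by move=> k; apply: infnorm_le => // i; rewrite mxE normr0.
have hr : r_in_uv Phi a (gradY Phi a) (gradZ Phi a) <= infnorm (gradX Phi a).
  rewrite /r_in_uv !subrr !ge_max lexx !z0 /=.
  apply/and3P; split.
  - apply: infnorm_le => // i; rewrite mxE /= min_r ?normr0 //; exact: (hC i).1.
  - apply: infnorm_le => // i; rewrite mxE /= min_r ?normr0 //; exact: (hC i).2.1.
  - apply: infnorm_le => // i; rewrite mxE (hC i).2.2 normr0 //.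
split=> //; split=> //.
apply: le_trans hr; rewrite /r_in; apply: ge_inf.
  exists 0 => y [uv _ <-]; rewrite /r_in_uv le_max infnorm_ge0 //.
by exists (gradY Phi a, gradZ Phi a).
Qed.

Lemma exmin (R : realType) (f : nat -> R) N :
  exists j, (j <= N)%N /\ forall k, (k <= N)%N -> f j <= f k.
Proof.
elim: N => [|N [j [jN hj]]].
  by exists 0%N; split=> // k; rewrite leqn0 => /eqP ->.
have [le|lt] := leP (f j) (f N.+1).
  exists j; split; first exact: leqW.
  by move=> k; rewrite leq_eqVlt ltnS => /orP [/eqP ->|/hj].
exists N.+1; split=> // k; rewrite leq_eqVlt ltnS => /orP [/eqP ->//|/hj].
by apply: le_trans; apply: ltW.
Qed.

Theorem theorem2 (R : realType) (n m : nat) (Phi : pt R n m -> R)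
    (w : nat -> pt R n m) (cX : R) :
  0 < cX -> A1 Phi w -> A2 Phi w cX -> A3 Phi w ->
  (forall eps : R, 0 < eps ->
     exists j : nat, exists u v : 'rV[R]_m,
       inMM (w j) u v /\ r_in_uv Phi (w j) u v <= eps /\ r_in Phi (w j) <= eps) /\
  (forall N : nat,
     \big[Num.min/r_in Phi (w 0%N)]_(j < N.+1) r_in Phi (w j)
       <= Num.sqrt ((Phi (w 0%N) - Phi_inf Phi) / (cX * N.+1%:R))).
Proof.
move=> c0 [[U [_ [Uw [dU _]]]] [_ [lb hlb]]] hA2 hA3.
pose g j := infnorm (gradX Phi (w j)).
have g0 : forall j, 0 <= g j by move=> j; exact: infnorm_ge0.
have hj : forall j, inMM (w j) (gradY Phi (w j)) (gradZ Phi (w j)) /\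
  r_in_uv Phi (w j) (gradY Phi (w j)) (gradZ Phi (w j)) <= g j /\
  r_in Phi (w j) <= g j.
  move=> j; apply: rin_le; [exact: dU | exact: (hA3 j).1 | exact: (hA3 j).2].
have hinf : forall j, Phi_inf Phi <= Phi (w j).
  move=> j; rewrite /Phi_inf; apply: ge_inf; last by exists (w j) => //; exact: (hA3 j).1.
  by exists lb => y [x hx <-]; exact: hlb.
pose D := Phi (w 0%N) - Phi_inf Phi.
have D0 : 0 <= D by rewrite /D subr_ge0.
have tele : forall N, Phi (w N) <= Phi (w 0%N) - \sum_(j < N) cX * g j ^+ 2.
  elim=> [|N IH]; first by rewrite big_ord0 subr0.
  rewrite big_ord_recr /=; have := hA2 N; rewrite -/(g N); lra.
have key : forall N, exists j, (j <= N)%N /\ g j ^+ 2 <= D / (cX * N.+1%:R).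
  move=> N; have [j [jN hmin]] := exmin R (fun j => g j ^+ 2) N.
  exists j; split=> //.
  have cN : 0 < cX * N.+1%:R by rewrite mulr_gt0 // ltr0n.
  rewrite ler_pdivlMr //.
  have hs : (cX * g j ^+ 2) *+ N.+1 <= \sum_(k < N.+1) cX * g k ^+ 2.
    have -> : (cX * g j ^+ 2) *+ N.+1 = \sum_(k < N.+1) (cX * g j ^+ 2).
      by rewrite sumr_const card_ord.
    apply: ler_sum => k _.
    by apply: ler_wpM2l; [exact: ltW | apply: hmin; rewrite -ltnS].
  have := tele N.+1; have := hinf N.+1; rewrite -mulr_natr in hs.
  rewrite /D; move: hs; set S := \sum_(_ < _) _; set K := N.+1%:R.
  nra.
split.
  move=> eps e0.
  have q0 : 0 <= D / (cX * eps ^+ 2) 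
    by apply: divr_ge0 => //; apply: mulr_ge0; [exact: ltW | exact: sqr_ge0].
  have hN := archi_boundP q0; set N := Num.Def.archi_bound _ in hN.
  have [j [_ hg]] := key N.
  have cN : 0 < cX * N.+1%:R by rewrite mulr_gt0 // ltr0n.
  have ce : 0 < cX * eps ^+ 2 by rewrite mulr_gt0 // exprn_gt0.
  have hNN : N%:R <= N.+1%:R :> R by rewrite ler_nat.
  have h1 : D < N%:R * (cX * eps ^+ 2) by rewrite -ltr_pdivrMr.
  have h2 : D / (cX * N.+1%:R) <= eps ^+ 2.
    rewrite ler_pdivrMr //; move: h1 hNN; set K := N%:R; set K1 := N.+1%:R.
    nra.
  have [hM [hr hr']] := hj j.
  have hge : g j ^+ 2 <= eps ^+ 2 := le_trans hg h2.
  have gle : g j <= eps.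
    have := g0 j; move: hge; set x := g j; move=> hge hx; nra.
  exists j, (gradY Phi (w j)), (gradZ Phi (w j)); split=> //; split.
    exact: le_trans gle.
  exact: le_trans hr' gle.
move=> N; have [j [jN hg]] := key N.
apply: le_trans (bigmin_le _ (Ordinal (jN : (j < N.+1)%N)) _) _ => /=.
apply: le_trans (hj j).2.2 _.
rewrite -[g j]ger0_norm // -sqrtr_sqr; exact: ler_wsqrtr.
Qed.
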